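(* Let $u_0$ be as in the context and put $K_0:=\sup_{X} y^2e^{-2u_0}|P(z)|^2<\infty$. Then $w_+:=u_0+y$ is a (classical, hence weak) super-solution of $( * )$ on $X$. Moreover, for every constant $C\ge \max\{1,K_0\}$, the continuous function $w_-:=u_0+f_C(y)$ is a weak sub-solution of $( * )$ on $X$, and $u_0\le w_-\le w_+$ on $X$.
   Context: Let $X=\mathbb{R}^2\times(0,+\infty)$ with coordinates $(x_1,x_2,y)$, $z=x_1+ix_2$, $R=\sqrt{|z|^2+y^2}$, and $\Delta=\partial_1^2+\partial_2^2+\partial_y^2$. Let $P(z)$ be a non-zero complex polynomial of degree $N$. Consider the equation $( * )$: $\Delta u+e^{-2u}|P(z)|^2=0$ on $X$. A continuous function $u$ on $X$ is a weak sub-solution (resp. super-solution) of $( * )$ if $\int_X\big(-u\Delta v-e^{-2u}|P|^2v\big)\le 0$ (resp. $\ge 0$) for every non-negative compactly supported smooth $v$ on $X$. Let $u_0$ be a smooth solution of $( * )$ on $X$ (the He–Mazzeo model solution satisfying the generalized Nahm pole boundary condition) with the properties: $\sup_X y\,e^{-u_0}|P(z)|<\infty$, and there are $R_0,K>0$ with $|u_0-N\ln R-\ln y|\le K$ whenever $R\ge R_0$. For $C\ge 1$ define $f_C(y)=0$ for $0<y\le C$ and $f_C(y)=y-C\ln(y/C)-C$ for $y\ge C$. *)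

(* Defs.v *)
From Stdlib Require Import Reals Lra List.
From Coquelicot Require Import Coquelicot.
Open Scope R_scope.

(* Functions on R^3 are written curried: f x1 x2 y. X = { y > 0 }. *)
Definition inX (x1 x2 y : R) : Prop := 0 < y.

(* partial derivatives: direction 0 = x1, 1 = x2, otherwise y *)
Definition pd (i : nat) (f : R -> R -> R -> R) : R -> R -> R -> R :=
  match i with
  | O => fun a b c => Derive (fun t => f t b c) a
  | S O => fun a b c => Derive (fun t => f a t c) b
  | _ => fun a b c => Derive (fun t => f a b t) c
  end.

Definition ex_pd (i : nat) (f : R -> R -> R -> R) (a b c : R) : Prop :=
  match i with
  | O => ex_derive (fun t => f t b c) a
  | S O => ex_derive (fun t => f a t c) b
  | _ => ex_derive (fun t => f a b t) c
  end.

Definition iter_pd (l : list nat) (f : R -> R -> R -> R) : R -> R -> R -> R :=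
  fold_right pd f l.

Definition cont3_at (f : R -> R -> R -> R) (a b c : R) : Prop :=
  continuous (fun p : R * R * R => f (fst (fst p)) (snd (fst p)) (snd p)) (a, b, c).

Definition smooth_on (D : R -> R -> R -> Prop) (f : R -> R -> R -> R) : Prop :=
  forall (l : list nat) (a b c : R), D a b c ->
    cont3_at (iter_pd l f) a b c /\
    (forall i, ex_pd i (iter_pd l f) a b c).

Definition Laplacian (f : R -> R -> R -> R) : R -> R -> R -> R :=
  fun a b c => pd 0 (pd 0 f) a b c + pd 1 (pd 1 f) a b c + pd 2 (pd 2 f) a b c.

(* Complex polynomials P(z) = sum_{k=0}^N coef k * z^k, z = x1 + i x2 *)
Fixpoint Cpow (z : C) (n : nat) : C :=
  match n with O => RtoC 1 | S m => Cmult z (Cpow z m) end.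

Fixpoint Peval (coef : nat -> C) (n : nat) (z : C) : C :=
  match n with
  | O => coef O
  | S m => Cplus (Peval coef m z) (Cmult (coef n) (Cpow z n))
  end.

Definition Pabs2 (coef : nat -> C) (N : nat) (x1 x2 : R) : R :=
  (Cmod (Peval coef N (x1, x2))) ^ 2.

(* Nonnegative smooth test function v with compact support contained in the
   box [-M,M] x [-M,M] x [d,M] subset of X (0 < d < M). *)
Definition test_fun (v : R -> R -> R -> R) (M d : R) : Prop :=
  smooth_on (fun _ _ _ => True) v /\
  (forall a b c, 0 <= v a b c) /\
  0 < d < M /\
  (forall a b c, (Rabs a > M \/ Rabs b > M \/ c < d \/ c > M) -> v a b c = 0).

(* integral over X of an integrand supported in the box [-M,M]^2 x [d,M] *)
Definition box_int (g : R -> R -> R -> R) (M d : R) : R :=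
  RInt (fun a => RInt (fun b => RInt (fun c => g a b c) d M) (-M) M) (-M) M.

Definition weak_integrand (coef : nat -> C) (N : nat) (u v : R -> R -> R -> R)
  : R -> R -> R -> R :=
  fun a b c => - u a b c * Laplacian v a b c
               - exp (-2 * u a b c) * Pabs2 coef N a b * v a b c.

Definition continuous_on_X (u : R -> R -> R -> R) : Prop :=
  forall a b c, inX a b c -> cont3_at u a b c.

Definition weak_subsolution (coef : nat -> C) (N : nat) (u : R -> R -> R -> R) : Prop :=
  continuous_on_X u /\
  forall v M d, test_fun v M d -> box_int (weak_integrand coef N u v) M d <= 0.

Definition weak_supersolution (coef : nat -> C) (N : nat) (u : R -> R -> R -> R) : Prop :=
  continuous_on_X u /\
  forall v M d, test_fun v M d -> 0 <= box_int (weak_integrand coef N u v) M d.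

Definition classical_supersolution (coef : nat -> C) (N : nat) (u : R -> R -> R -> R) : Prop :=
  smooth_on inX u /\
  forall a b c, inX a b c -> Laplacian u a b c + exp (-2 * u a b c) * Pabs2 coef N a b <= 0.

Definition is_solution (coef : nat -> C) (N : nat) (u : R -> R -> R -> R) : Prop :=
  smooth_on inX u /\
  forall a b c, inX a b c -> Laplacian u a b c + exp (-2 * u a b c) * Pabs2 coef N a b = 0.

Definition Rnorm3 (a b c : R) : R := sqrt (a ^ 2 + b ^ 2 + c ^ 2).

Definition fC (C0 y : R) : R :=
  if Rle_dec y C0 then 0 else y - C0 * ln (y / C0) - C0.

(* Main.v *)
Require Import Defs.
From Stdlib Require Import Reals Lra Lia List Classical ClassicalEpsilon.
From Coquelicot Require Import Coquelicot.
Import ListNotations.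
Open Scope R_scope.

Lemma ballR x e y : ball x e y <-> Rabs (y - x) < e.
Proof. split; intro H; exact H. Qed.

Lemma cont_pair {T U V : UniformSpace} (f: T->U) (g: T->V) x: continuous f x -> continuous g x -> continuous (fun t => (f t, g t)) x.
Proof. intros Hf Hg P [eps HP].
  assert (H1 := Hf _ (locally_ball (f x) eps)).
  assert (H2 := Hg _ (locally_ball (g x) eps)).
  unfold filtermap in *. generalize (filter_and _ _ H1 H2). apply filter_imp.
  intros t [h1 h2]. apply HP. split; assumption. Qed.

Lemma param_cont {T : UniformSpace} (h : T -> R -> R) (lo hi : R) (p0 : T) :
  lo <= hi ->
  (forall p c, lo <= c <= hi -> continuous (fun q : T * R => h (fst q) (snd q)) (p, c)) ->
  continuous (fun p => RInt (h p) lo hi) p0.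
Proof.
  intros Hlh Hc.
  assert (Hint : forall p, ex_RInt (h p) lo hi).
  { intro p. apply (ex_RInt_continuous (V:=R_CompleteNormedModule)). intros z Hz.
    rewrite Rmin_left in Hz by lra. rewrite Rmax_right in Hz by lra.
    apply (continuous_comp (fun t : R => (p, t)) (fun q : T * R => h (fst q) (snd q))).
    - apply cont_pair. apply continuous_const. apply continuous_id.
    - apply Hc; auto. }
  apply filterlim_locally. intros eps.
  set (e := eps / (2 * (hi - lo) + 2)).
  assert (He : 0 < e). { unfold e. apply Rdiv_lt_0_compat. destruct eps; simpl; lra. lra. }
  assert (Hex : forall c, exists del : posreal, lo <= c <= hi ->
     forall p c', ball p0 del p -> Rabs (c' - c) < del -> Rabs (h p c' - h p0 c) < e).
  { intro c. destruct (Rle_dec lo c) as [H1|H1]; [destruct (Rle_dec c hi) as [H2|H2]|].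
    - assert (Hl := Hc p0 c (conj H1 H2) _ (locally_ball (h p0 c) (mkposreal e He))).
      destruct Hl as [del Hdel]. exists del. intros _ p c' Hp Hc'.
      apply (Hdel (p, c')). split; [exact Hp | exact Hc'].
    - exists (mkposreal 1 Rlt_0_1). intros Hcc. lra.
    - exists (mkposreal 1 Rlt_0_1). intros Hcc. lra. }
  set (delta := fun c => proj1_sig (constructive_indefinite_description _ (Hex c))).
  assert (Hdelta : forall c, lo <= c <= hi ->
     forall p c', ball p0 (delta c) p -> Rabs (c' - c) < delta c -> Rabs (h p c' - h p0 c) < e).
  { intro c. unfold delta. destruct (constructive_indefinite_description _ (Hex c)) as [x Hx]. exact Hx. }
  destruct (compactness_value_1d lo hi delta) as [d0 Hd0].
  exists d0. intros p Hp.
  assert (Hpt : forall x, lo <= x <= hi -> Rabs (h p x - h p0 x) <= 2 * e).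
  { intros x Hx. apply NNPP. intro Hn. apply (Hd0 x Hx). intros [t [Ht [Hxt Hdt]]].
    apply Hn.
    assert (Hb : ball p0 (delta t) p). { apply ball_le with d0. exact Hdt. exact Hp. }
    assert (A1 := Hdelta t Ht p x Hb Hxt).
    assert (A2 := Hdelta t Ht p0 x (ball_center _ _) Hxt).
    replace (h p x - h p0 x) with ((h p x - h p0 t) - (h p0 x - h p0 t)) by ring.
    eapply Rle_trans. apply Rabs_triang. rewrite Rabs_Ropp. lra. }
  apply ballR.
  assert (Heq : RInt (h p) lo hi - RInt (h p0) lo hi = RInt (fun x => h p x - h p0 x) lo hi).
  { symmetry. apply (RInt_minus (V:=R_CompleteNormedModule) (h p) (h p0)); auto. }
  rewrite Heq.
  eapply Rle_lt_trans. apply abs_RInt_le_const. exact Hlh.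
  apply (ex_RInt_minus (h p) (h p0)); auto. exact Hpt.
  unfold e. destruct eps as [eps Heps]; simpl.
  apply Rle_lt_trans with (eps * ((2*(hi - lo)) / (2 * (hi - lo) + 2))).
  right. field. lra.
  rewrite <- (Rmult_1_r eps) at 2. apply Rmult_lt_compat_l. lra.
  apply Rmult_lt_reg_r with (2 * (hi - lo) + 2). lra. unfold Rdiv. rewrite Rmult_assoc, Rinv_l by lra. lra.
Qed.
Definition C3 (f : R -> R -> R -> R) := forall a b c, 0 < c -> cont3_at f a b c.

Lemma C3_plus f g : C3 f -> C3 g -> C3 (fun a b c => f a b c + g a b c).
Proof. intros Hf Hg a b c Hc. unfold cont3_at.
  apply (continuous_plus (fun p : R*R*R => f _ _ _) (fun p : R*R*R => g _ _ _)); [apply Hf|apply Hg]; auto. Qed.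
Lemma C3_mult f g : C3 f -> C3 g -> C3 (fun a b c => f a b c * g a b c).
Proof. intros Hf Hg a b c Hc. unfold cont3_at.
  apply (continuous_mult (fun p : R*R*R => f _ _ _) (fun p : R*R*R => g _ _ _)); [apply Hf|apply Hg]; auto. Qed.
Lemma C3_opp f : C3 f -> C3 (fun a b c => - f a b c).
Proof. intros Hf a b c Hc. unfold cont3_at.
  apply (continuous_opp (fun p : R*R*R => f _ _ _)); apply Hf; auto. Qed.
Lemma C3_const k : C3 (fun _ _ _ => k).
Proof. intros a b c Hc. unfold cont3_at. apply continuous_const. Qed.
Lemma C3_c (h : R -> R) : (forall c, 0 < c -> continuous h c) -> C3 (fun _ _ c => h c).
Proof. intros Hh a b c Hc. unfold cont3_at.
  apply (continuous_comp (fun p : R*R*R => snd p) h). apply continuous_snd. apply Hh; auto. Qed.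
Lemma C3_comp f (h : R -> R) : C3 f -> (forall x, continuous h x) -> C3 (fun a b c => h (f a b c)).
Proof. intros Hf Hh a b c Hc. unfold cont3_at.
  apply (continuous_comp (fun p : R*R*R => f _ _ _) h). apply Hf; auto. apply Hh. Qed.

Lemma cont3_a f a b c : cont3_at f a b c -> continuous (fun t => f t b c) a.
Proof. intro H. apply (continuous_comp (fun t : R => (t, b, c)) (fun p : R*R*R => f (fst (fst p)) (snd (fst p)) (snd p))).
  apply cont_pair. apply cont_pair. apply continuous_id. apply continuous_const. apply continuous_const. exact H. Qed.
Lemma cont3_b f a b c : cont3_at f a b c -> continuous (fun t => f a t c) b.
Proof. intro H. apply (continuous_comp (fun t : R => (a, t, c)) (fun p : R*R*R => f (fst (fst p)) (snd (fst p)) (snd p))).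
  apply cont_pair. apply cont_pair. apply continuous_const. apply continuous_id. apply continuous_const. exact H. Qed.
Lemma cont3_c f a b c : cont3_at f a b c -> continuous (fun t => f a b t) c.
Proof. intro H. apply (continuous_comp (fun t : R => (a, b, t)) (fun p : R*R*R => f (fst (fst p)) (snd (fst p)) (snd p))).
  apply cont_pair. apply cont_pair. apply continuous_const. apply continuous_const. apply continuous_id. exact H. Qed.
Lemma cont3_ac f a b c : cont3_at f a b c -> continuity_2d_pt (fun u v => f u b v) a c.
Proof. intro H. apply continuity_2d_pt_filterlim.
  apply (continuous_comp (fun z : R*R => (fst z, b, snd z)) (fun p : R*R*R => f (fst (fst p)) (snd (fst p)) (snd p)) (a,c)).
  apply cont_pair. apply cont_pair. apply continuous_fst. apply continuous_const. apply continuous_snd. exact H. Qed.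
Lemma cont3_bc f a b c : cont3_at f a b c -> continuity_2d_pt (fun u v => f a u v) b c.
Proof. intro H. apply continuity_2d_pt_filterlim.
  apply (continuous_comp (fun z : R*R => (a, fst z, snd z)) (fun p : R*R*R => f (fst (fst p)) (snd (fst p)) (snd p)) (b,c)).
  apply cont_pair. apply cont_pair. apply continuous_const. apply continuous_fst. apply continuous_snd. exact H. Qed.

Lemma L1 H d M : C3 H -> 0 < d -> d <= M ->
  forall q : R*R, continuous (fun q : R*R => RInt (H (fst q) (snd q)) d M) q.
Proof. intros HH Hd HdM q.
  apply (param_cont (fun q c => H (fst q) (snd q) c)). exact HdM.
  intros [a b] c Hc. apply HH. lra. Qed.

Lemma L1' (G : R -> R -> R) lo hi : lo <= hi ->
  (forall q : R*R, continuous (fun q : R*R => G (fst q) (snd q)) q) ->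
  forall a, continuous (fun a => RInt (G a) lo hi) a.
Proof. intros Hl HG a. apply param_cont. exact Hl. intros p c _. apply HG. Qed.

Lemma cont_2d (G : R -> R -> R) x y : continuous (fun q : R*R => G (fst q) (snd q)) (x,y) -> continuity_2d_pt G x y.
Proof. intro H. apply continuity_2d_pt_filterlim. exact H. Qed.

Lemma RInt_plusR f g a b : ex_RInt f a b -> ex_RInt g a b ->
  RInt (fun x => f x + g x) a b = RInt f a b + RInt g a b.
Proof. intros H1 H2. exact (RInt_plus (V:=R_CompleteNormedModule) f g a b H1 H2). Qed.

Lemma exc H a b d M : C3 H -> 0 < d -> d <= M -> ex_RInt (fun c => H a b c) d M.
Proof. intros HH Hd HdM. apply (ex_RInt_continuous (V:=R_CompleteNormedModule)).
  intros z Hz. rewrite Rmin_left in Hz by lra. rewrite Rmax_right in Hz by lra.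
  apply cont3_c. apply HH. lra. Qed.

Lemma contb H a b d M : C3 H -> 0 < d -> d <= M -> continuous (fun b => RInt (fun c => H a b c) d M) b.
Proof. intros HH Hd HdM.
  apply (continuous_comp (fun t : R => (a, t)) (fun q : R*R => RInt (H (fst q) (snd q)) d M)).
  apply cont_pair. apply continuous_const. apply continuous_id. apply L1; auto. Qed.

Lemma exb H a d M lo hi : C3 H -> 0 < d -> d <= M -> ex_RInt (fun b => RInt (fun c => H a b c) d M) lo hi.
Proof. intros HH Hd HdM. apply (ex_RInt_continuous (V:=R_CompleteNormedModule)).
  intros z _. apply contb; auto. Qed.

Lemma conta H d M lo hi a : C3 H -> 0 < d -> d <= M -> lo <= hi ->
  continuous (fun a => RInt (fun b => RInt (fun c => H a b c) d M) lo hi) a.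
Proof. intros HH Hd HdM Hl.
  apply (L1' (fun a b => RInt (fun c => H a b c) d M)). exact Hl.
  intro q. apply L1; auto. Qed.

Lemma exa H d M lo hi : C3 H -> 0 < d -> d <= M -> lo <= hi ->
  ex_RInt (fun a => RInt (fun b => RInt (fun c => H a b c) d M) lo hi) lo hi.
Proof. intros HH Hd HdM Hl. apply (ex_RInt_continuous (V:=R_CompleteNormedModule)).
  intros z _. apply conta; auto. Qed.

Lemma box_int_plus f g M d : C3 f -> C3 g -> 0 < d < M ->
  box_int (fun a b c => f a b c + g a b c) M d = box_int f M d + box_int g M d.
Proof. intros Hf Hg Hd. unfold box_int.
  rewrite <- RInt_plusR by (apply exa; auto; lra).
  apply RInt_ext. intros a _.
  rewrite <- RInt_plusR by (apply exb; auto; lra).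
  apply RInt_ext. intros b _.
  apply RInt_plusR; apply exc; auto; lra. Qed.

Lemma box_int_ext f g M d : 0 < d < M ->
  (forall a b c, 0 < c -> f a b c = g a b c) -> box_int f M d = box_int g M d.
Proof. intros Hd H. unfold box_int. apply RInt_ext. intros a _. apply RInt_ext. intros b _.
  apply RInt_ext. intros c Hc. apply H. destruct Hc as [Hc _].
  apply Rle_lt_trans with (Rmin d M); auto. unfold Rmin; destruct Rle_dec; lra. Qed.

Lemma RInt0 a b : RInt (fun _ => 0) a b = 0.
Proof. rewrite RInt_const. unfold scal; simpl; unfold mult; simpl. ring. Qed.

Lemma box_int_le0 f M d : C3 f -> 0 < d < M ->
  (forall a b, -M <= a <= M -> -M <= b <= M -> RInt (fun c => f a b c) d M <= 0) ->
  box_int f M d <= 0.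
Proof. intros Hf Hd H. unfold box_int.
  apply Rle_trans with (RInt (fun _ => 0) (-M) M); [|right; apply RInt0].
  apply RInt_le. lra. apply exa; auto; lra. apply ex_RInt_const.
  intros a Ha.
  apply Rle_trans with (RInt (fun _ => 0) (-M) M); [|right; apply RInt0].
  apply RInt_le. lra. apply exb; auto; lra. apply ex_RInt_const.
  intros b Hb. apply H; lra. Qed.

Lemma box_int_ge0 f M d : C3 f -> 0 < d < M ->
  (forall a b, -M <= a <= M -> -M <= b <= M -> 0 <= RInt (fun c => f a b c) d M) ->
  0 <= box_int f M d.
Proof. intros Hf Hd H. unfold box_int.
  apply Rle_trans with (RInt (fun _ => 0) (-M) M); [right; symmetry; apply RInt0|].
  apply RInt_le. lra. apply ex_RInt_const. apply exa; auto; lra. 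
  intros a Ha.
  apply Rle_trans with (RInt (fun _ => 0) (-M) M); [right; symmetry; apply RInt0|].
  apply RInt_le. lra. apply ex_RInt_const. apply exb; auto; lra.
  intros b Hb. apply H; lra. Qed.

Lemma pderiv (F DF : R -> R -> R) m lo hi x : m < lo -> lo <= hi ->
  (forall u t, m < t -> is_derive (fun z => F z t) u (DF u t)) ->
  (forall u t, m < t -> continuity_2d_pt DF u t) ->
  (forall u, ex_RInt (F u) lo hi) ->
  is_derive (fun z => RInt (F z) lo hi) x (RInt (DF x) lo hi).
Proof. intros Hm Hl HD HC HI.
  assert (Hd := is_derive_RInt_param F lo hi x).
  rewrite Rmin_left, Rmax_right in Hd by lra.
  replace (RInt (DF x) lo hi) with (RInt (fun t => Derive (fun u => F u t) x) lo hi).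
  apply Hd.
  - apply filter_forall. intros y t Ht. eexists. apply HD. lra.
  - intros t Ht. apply continuity_2d_pt_ext_loc with DF.
    + assert (Hp : 0 < t - m) by lra. exists (mkposreal _ Hp). intros u v _ Hv. simpl in Hv.
      symmetry. apply is_derive_unique. apply HD. apply Rabs_lt_between in Hv. lra.
    + apply HC. lra.
  - apply filter_forall. intro y. apply HI.
  - apply RInt_ext. intros t Ht. rewrite Rmin_left, Rmax_right in Ht by lra.
    apply is_derive_unique. apply HD. lra.
Qed.

Lemma int_dc_zero H DH M d : C3 DH -> 0 < d < M ->
  (forall a b c, 0 < c -> is_derive (fun t => H a b t) c (DH a b c)) ->
  (forall a b, -M <= a <= M -> -M <= b <= M -> H a b d = 0 /\ H a b M = 0) ->
  box_int DH M d = 0.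
Proof. intros HC Hd HD Hb. unfold box_int.
  rewrite <- (RInt0 (-M) M). apply RInt_ext. intros a Ha.
  rewrite Rmin_left, Rmax_right in Ha by lra.
  rewrite <- (RInt0 (-M) M). apply RInt_ext. intros b Hbb.
  rewrite Rmin_left, Rmax_right in Hbb by lra.
  apply is_RInt_unique.
  destruct (Hb a b) as [H1 H2]; try lra.
  replace 0 with (minus (H a b M) (H a b d)) by (rewrite H1, H2; unfold minus, plus, opp; simpl; ring).
  apply (is_RInt_derive (V:=R_CompleteNormedModule) (fun t => H a b t)).
  - intros x Hx. rewrite Rmin_left, Rmax_right in Hx by lra. apply HD. lra.
  - intros x Hx. rewrite Rmin_left, Rmax_right in Hx by lra. apply cont3_c. apply HC. lra.
Qed.

Lemma int_db_zero H DH M d : C3 H -> C3 DH -> 0 < d < M ->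
  (forall a b c, 0 < c -> is_derive (fun t => H a t c) b (DH a b c)) ->
  (forall a c, d <= c <= M -> H a (-M) c = 0 /\ H a M c = 0) ->
  box_int DH M d = 0.
Proof. intros HC0 HC Hd HD Hb. unfold box_int.
  rewrite <- (RInt0 (-M) M). apply RInt_ext. intros a Ha.
  apply is_RInt_unique.
  set (G := fun b => RInt (fun c => H a b c) d M).
  replace 0 with (minus (G M) (G (-M))).
  apply (is_RInt_derive (V:=R_CompleteNormedModule) G).
  - intros x Hx. unfold G.
    apply (pderiv (fun u c => H a u c) (fun u c => DH a u c) 0 d M x); try lra.
    + intros u t Ht. apply HD. lra.
    + intros u t Ht. apply cont3_bc. apply HC. lra.
    + intro u. apply exc; auto; lra.
  - intros x _. apply contb; auto; lra.
  - unfold G. rewrite (RInt_ext _ (fun _ => 0)), (RInt_ext (fun c => H a (-M) c) (fun _ => 0)), RInt0.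
    unfold minus, plus, opp; simpl; ring.
    + intros c Hc. rewrite Rmin_left, Rmax_right in Hc by lra. apply Hb. lra.
    + intros c Hc. rewrite Rmin_left, Rmax_right in Hc by lra. apply Hb. lra.
Qed.

Lemma int_da_zero H DH M d : C3 H -> C3 DH -> 0 < d < M ->
  (forall a b c, 0 < c -> is_derive (fun t => H t b c) a (DH a b c)) ->
  (forall b c, d <= c <= M -> H (-M) b c = 0 /\ H M b c = 0) ->
  box_int DH M d = 0.
Proof. intros HC0 HC Hd HD Hb. unfold box_int.
  pose (G := fun a b => RInt (fun c => H a b c) d M).
  pose (DG := fun a b => RInt (fun c => DH a b c) d M).
  assert (S1 : forall a b, is_derive (fun z => G z b) a (DG a b)).
  { intros a b. unfold G, DG.
    apply (pderiv (fun u c => H u b c) (fun u c => DH u b c) 0 d M a); try lra.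
    + intros u t Ht. apply HD. lra.
    + intros u t Ht. apply cont3_ac. apply HC. lra.
    + intro u. apply exc; auto; lra. }
  pose (F := fun a => RInt (G a) (-M) M).
  assert (HG : forall b, G M b = 0 /\ G (-M) b = 0).
  { intro b. unfold G. split.
    + rewrite (RInt_ext _ (fun _ => 0)). apply RInt0.
      intros c Hc. rewrite Rmin_left, Rmax_right in Hc by lra. apply Hb. lra.
    + rewrite (RInt_ext _ (fun _ => 0)). apply RInt0.
      intros c Hc. rewrite Rmin_left, Rmax_right in Hc by lra. apply Hb. lra. }
  assert (HF : F M = 0 /\ F (-M) = 0).
  { split; unfold F; (transitivity (RInt (fun _:R => 0) (-M) M); [apply RInt_ext; intros b _; first [exact (proj1 (HG b)) | exact (proj2 (HG b))] | apply RInt0]). }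
  assert (HI : is_RInt (fun a => RInt (DG a) (-M) M) (-M) M (minus (F M) (F (-M)))).
  { apply (is_RInt_derive (V:=R_CompleteNormedModule) F).
  - intros x Hx. unfold F.
    apply (pderiv G DG (-M-1) (-M) M x); try lra.
    + intros u t Ht. apply S1.
    + intros u t Ht. apply cont_2d. unfold DG. apply L1; auto; lra.
    + intro u. apply exb; auto; lra.
  - intros x _. apply conta; auto; lra. }
  apply is_RInt_unique in HI. unfold DG in HI. rewrite HI. destruct HF as [-> ->].
  unfold minus, plus, opp; simpl; ring.
Qed.

Lemma dplus f g x df dg : is_derive f x df -> is_derive g x dg -> is_derive (fun t => f t + g t) x (df + dg).
Proof. intros; apply (is_derive_plus f g); auto. Qed.
Lemma dmult f g x df dg : is_derive f x df -> is_derive g x dg -> is_derive (fun t => f t * g t) x (df * g x + f x * dg).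
Proof. intros. apply (is_derive_mult f g); auto. intros; apply Rmult_comm. Qed.
Lemma dopp f x df : is_derive f x df -> is_derive (fun t => - f t) x (- df).
Proof. intros; apply (is_derive_opp f); auto. Qed.
Lemma dminus f g x df dg : is_derive f x df -> is_derive g x dg -> is_derive (fun t => f t - g t) x (df - dg).
Proof. intros; apply (is_derive_minus f g); auto. Qed.
Lemma dconst (k x : R) : is_derive (fun _ : R => k) x 0.
Proof. apply (is_derive_const (V:=R_NormedModule)). Qed.
Lemma deq (f : R -> R) (x l lp : R) : is_derive f x l -> l = lp -> is_derive f x lp.
Proof. intros H ->; auto. Qed.

Lemma loc_delta (x del : R) (P : R -> Prop) : 0 < del -> (forall t, Rabs (t - x) < del -> P t) -> locally x P.
Proof. intros Hd H. exists (mkposreal del Hd). intros t Ht. apply H. exact Ht. Qed.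

Lemma vanish_r (h : R -> R) x : continuous h x -> (forall y, x < y -> h y = 0) -> h x = 0.
Proof. intros Hc Hz. destruct (Req_dec (h x) 0) as [E|E]; auto.
  assert (Hp : 0 < Rabs (h x)) by (apply Rabs_pos_lt; auto).
  assert (Hl := proj1 (filterlim_locally h (h x)) Hc (mkposreal _ Hp)).
  destruct Hl as [del Hdel].
  assert (Hb := Hdel (x + del/2)). 
  assert (HH : ball x del (x + del / 2)).
  { apply ballR. destruct del as [del Hd]; simpl. rewrite Rabs_pos_eq; lra. }
  specialize (Hb HH). rewrite Hz in Hb. 
  assert (Hb' : Rabs (0 - h x) < Rabs (h x)) by exact Hb.
  rewrite Rminus_0_l, Rabs_Ropp in Hb'. lra.
  destruct del; simpl; lra. Qed.

Lemma vanish_l (h : R -> R) x : continuous h x -> (forall y, y < x -> h y = 0) -> h x = 0.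
Proof. intros Hc Hz. destruct (Req_dec (h x) 0) as [E|E]; auto.
  assert (Hp : 0 < Rabs (h x)) by (apply Rabs_pos_lt; auto).
  assert (Hl := proj1 (filterlim_locally h (h x)) Hc (mkposreal _ Hp)).
  destruct Hl as [del Hdel].
  assert (Hb := Hdel (x - del/2)). 
  assert (HH : ball x del (x - del / 2)).
  { apply ballR. destruct del as [del Hd]; simpl. replace (x - del/2 - x) with (-(del/2)) by ring. rewrite Rabs_Ropp, Rabs_pos_eq; lra. }
  specialize (Hb HH). rewrite Hz in Hb. 
  assert (Hb' : Rabs (0 - h x) < Rabs (h x)) by exact Hb.
  rewrite Rminus_0_l, Rabs_Ropp in Hb'. lra.
  destruct del; simpl; lra. Qed.

Definition Zout (M d a b c : R) : Prop := Rabs a > M \/ Rabs b > M \/ c < d \/ c > M.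

Lemma Zout_loc_a M d a b c : 0 < d < M -> Zout M d a b c -> locally a (fun t => Zout M d t b c).
Proof. intros Hd [H|[H|[H|H]]].
  - apply loc_delta with (Rabs a - M). lra. intros t Ht. left.
    assert (Rabs a <= Rabs t + Rabs (t - a)).
    { replace a with (t - (t - a)) at 1 by ring. eapply Rle_trans. apply Rabs_triang. rewrite Rabs_Ropp. lra. }
    lra.
  - apply filter_forall. intros; right; left; auto.
  - apply filter_forall. intros; right; right; left; auto.
  - apply filter_forall. intros; right; right; right; auto.
Qed.
Lemma Zout_loc_b M d a b c : 0 < d < M -> Zout M d a b c -> locally b (fun t => Zout M d a t c).
Proof. intros Hd [H|[H|[H|H]]].
  - apply filter_forall. intros; left; auto.
  - apply loc_delta with (Rabs b - M). lra. intros t Ht. right; left.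
    assert (Rabs b <= Rabs t + Rabs (t - b)).
    { replace b with (t - (t - b)) at 1 by ring. eapply Rle_trans. apply Rabs_triang. rewrite Rabs_Ropp. lra. }
    lra.
  - apply filter_forall. intros; right; right; left; auto.
  - apply filter_forall. intros; right; right; right; auto.
Qed.
Lemma Zout_loc_c M d a b c : 0 < d < M -> Zout M d a b c -> locally c (fun t => Zout M d a b t).
Proof. intros Hd [H|[H|[H|H]]].
  - apply filter_forall. intros; left; auto.
  - apply filter_forall. intros; right; left; auto.
  - apply loc_delta with (d - c). lra. intros t Ht. right; right; left.
    apply Rabs_lt_between in Ht. lra.
  - apply loc_delta with (c - M). lra. intros t Ht. right; right; right.
    apply Rabs_lt_between in Ht. lra.
Qed.

Lemma pd_zero i f M d : 0 < d < M -> (forall a b c, Zout M d a b c -> f a b c = 0) ->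
  forall a b c, Zout M d a b c -> pd i f a b c = 0.
Proof. intros Hd Hf a b c Hz. destruct i as [|[|i]]; simpl.
  - rewrite (Derive_ext_loc _ (fun _ => 0)). apply Derive_const.
    generalize (Zout_loc_a _ _ _ _ _ Hd Hz). apply filter_imp. intros t Ht. apply Hf; auto.
  - rewrite (Derive_ext_loc _ (fun _ => 0)). apply Derive_const.
    generalize (Zout_loc_b _ _ _ _ _ Hd Hz). apply filter_imp. intros t Ht. apply Hf; auto.
  - rewrite (Derive_ext_loc _ (fun _ => 0)). apply Derive_const.
    generalize (Zout_loc_c _ _ _ _ _ Hd Hz). apply filter_imp. intros t Ht. apply Hf; auto.
Qed.

Lemma closure_zero f M d : 0 < d < M -> (forall a b c, cont3_at f a b c) ->
  (forall a b c, Zout M d a b c -> f a b c = 0) ->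
  (forall b c, f M b c = 0 /\ f (-M) b c = 0) /\
  (forall a c, f a M c = 0 /\ f a (-M) c = 0) /\
  (forall a b, f a b d = 0 /\ f a b M = 0).
Proof. intros Hd Hc Hf. split; [|split].
  - intros b c. split.
    + apply (vanish_r (fun t => f t b c)). apply cont3_a, Hc.
      intros y Hy. apply Hf. left. rewrite Rabs_pos_eq; lra.
    + apply (vanish_l (fun t => f t b c)). apply cont3_a, Hc.
      intros y Hy. apply Hf. left. rewrite Rabs_left; lra.
  - intros a c. split.
    + apply (vanish_r (fun t => f a t c)). apply cont3_b, Hc.
      intros y Hy. apply Hf. right; left. rewrite Rabs_pos_eq; lra.
    + apply (vanish_l (fun t => f a t c)). apply cont3_b, Hc.
      intros y Hy. apply Hf. right; left. rewrite Rabs_left; lra.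
  - intros a b. split.
    + apply (vanish_l (fun t => f a b t)). apply cont3_c, Hc.
      intros y Hy. apply Hf. right; right; left; lra.
    + apply (vanish_r (fun t => f a b t)). apply cont3_c, Hc.
      intros y Hy. apply Hf. right; right; right; lra.
Qed.


Lemma C3_minus f g : C3 f -> C3 g -> C3 (fun a b c => f a b c - g a b c).
Proof. intros Hf Hg. apply (C3_plus f (fun a b c => - g a b c)); auto. apply C3_opp; auto. Qed.

Lemma sm_cont D f l a b c : smooth_on D f -> D a b c -> cont3_at (iter_pd l f) a b c.
Proof. intros H HD. apply (H l a b c HD). Qed.
Lemma sm_d0 D f l a b c : smooth_on D f -> D a b c ->
  is_derive (fun t => iter_pd l f t b c) a (iter_pd (0%nat :: l) f a b c).
Proof. intros H HD. destruct (H l a b c HD) as [_ Hx]. exact (Derive_correct _ _ (Hx 0%nat)). Qed.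
Lemma sm_d1 D f l a b c : smooth_on D f -> D a b c ->
  is_derive (fun t => iter_pd l f a t c) b (iter_pd (1%nat :: l) f a b c).
Proof. intros H HD. destruct (H l a b c HD) as [_ Hx]. exact (Derive_correct _ _ (Hx 1%nat)). Qed.
Lemma sm_d2 D f l a b c : smooth_on D f -> D a b c ->
  is_derive (fun t => iter_pd l f a b t) c (iter_pd (2%nat :: l) f a b c).
Proof. intros H HD. destruct (H l a b c HD) as [_ Hx]. exact (Derive_correct _ _ (Hx 2%nat)). Qed.

Lemma der_cont (f : R -> R) x l : is_derive f x l -> continuous f x.
Proof. intro H. apply (ex_derive_continuous (V:=R_NormedModule) f). exists l; auto. Qed.

Definition Eu (u0 : R -> R -> R -> R) := fun a b c =>
  -(pd 0 (pd 0 u0) a b c + pd 1 (pd 1 u0) a b c + pd 2 (pd 2 u0) a b c).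
Definition Qp u0 (g dg : R -> R) (v : R -> R -> R -> R) := fun a b c =>
  Eu u0 a b c * v a b c * (1 - exp (-2 * g c)) + dg c * pd 2 v a b c.

Definition Ha u0 (g : R -> R) v := fun a b c : R => -(u0 a b c + g c) * pd 0 v a b c + pd 0 u0 a b c * v a b c.
Definition DHa u0 (g : R -> R) v := fun a b c : R => -(u0 a b c + g c) * pd 0 (pd 0 v) a b c + pd 0 (pd 0 u0) a b c * v a b c.
Definition Hb u0 (g : R -> R) v := fun a b c : R => -(u0 a b c + g c) * pd 1 v a b c + pd 1 u0 a b c * v a b c.
Definition DHb u0 (g : R -> R) v := fun a b c : R => -(u0 a b c + g c) * pd 1 (pd 1 v) a b c + pd 1 (pd 1 u0) a b c * v a b c.
Definition Kc u0 (g : R -> R) v := fun a b c : R => pd 2 u0 a b c * v a b c - u0 a b c * pd 2 v a b c - g c * pd 2 v a b c.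
Definition DKc u0 (g dg : R -> R) v := fun a b c : R => pd 2 (pd 2 u0) a b c * v a b c - u0 a b c * pd 2 (pd 2 v) a b c
   - dg c * pd 2 v a b c - g c * pd 2 (pd 2 v) a b c.

Lemma Ha_der u0 g v a b c : smooth_on inX u0 -> smooth_on (fun _ _ _ => True) v -> 0 < c ->
  is_derive (fun t => Ha u0 g v t b c) a (DHa u0 g v a b c).
Proof. intros Hu Hv Hc. unfold Ha, DHa.
  assert (H1 := sm_d0 _ u0 [] a b c Hu Hc). assert (H2 := sm_d0 _ u0 [0%nat] a b c Hu Hc).
  assert (H3 := sm_d0 _ v [] a b c Hv I). assert (H4 := sm_d0 _ v [0%nat] a b c Hv I).
  simpl in H1, H2, H3, H4.
  eapply deq. apply dplus. apply dmult. apply dopp. apply dplus. exact H1. apply dconst. exact H4.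
  apply dmult. exact H2. exact H3. simpl. ring. Qed.
Lemma Hb_der u0 g v a b c : smooth_on inX u0 -> smooth_on (fun _ _ _ => True) v -> 0 < c ->
  is_derive (fun t => Hb u0 g v a t c) b (DHb u0 g v a b c).
Proof. intros Hu Hv Hc. unfold Hb, DHb.
  assert (H1 := sm_d1 _ u0 [] a b c Hu Hc). assert (H2 := sm_d1 _ u0 [1%nat] a b c Hu Hc).
  assert (H3 := sm_d1 _ v [] a b c Hv I). assert (H4 := sm_d1 _ v [1%nat] a b c Hv I).
  simpl in H1, H2, H3, H4.
  eapply deq. apply dplus. apply dmult. apply dopp. apply dplus. exact H1. apply dconst. exact H4.
  apply dmult. exact H2. exact H3. simpl. ring. Qed.
Lemma Kc_der u0 g dg v a b c : smooth_on inX u0 -> smooth_on (fun _ _ _ => True) v -> 0 < c ->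
  is_derive g c (dg c) ->
  is_derive (fun t => Kc u0 g v a b t) c (DKc u0 g dg v a b c).
Proof. intros Hu Hv Hc Hg. unfold Kc, DKc.
  assert (H1 := sm_d2 _ u0 [] a b c Hu Hc). assert (H2 := sm_d2 _ u0 [2%nat] a b c Hu Hc).
  assert (H3 := sm_d2 _ v [] a b c Hv I). assert (H4 := sm_d2 _ v [2%nat] a b c Hv I).
  simpl in H1, H2, H3, H4.
  eapply deq. apply dminus. apply dminus. apply dmult. exact H2. exact H3.
  apply dmult. exact H1. exact H4. apply dmult. exact Hg. exact H4. simpl. ring. Qed.

Lemma key N coef u0 (g dg : R -> R) v M d :
  is_solution coef N u0 -> (forall c, 0 < c -> is_derive g c (dg c)) ->
  (forall c, 0 < c -> continuous dg c) -> test_fun v M d ->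
  box_int (weak_integrand coef N (fun a b c => u0 a b c + g c) v) M d = box_int (Qp u0 g dg v) M d.
Proof.
  intros [Hs Hpde] Hg Hdg [Hv [Hv0 [Hd Hvz]]].
  assert (CU : forall l, C3 (iter_pd l u0)). { intros l a b c Hc. apply (sm_cont inX); auto. }
  assert (CV : forall l a b c, cont3_at (iter_pd l v) a b c). { intros l a b c. apply (sm_cont (fun _ _ _ => True)); auto. }
  assert (CVX : forall l, C3 (iter_pd l v)). { intros l a b c _. apply CV. }
  assert (Cg : C3 (fun _ _ c => g c)). { apply C3_c. intros c Hc. eapply der_cont; apply Hg; auto. }
  assert (Cdg : C3 (fun _ _ c => dg c)). { apply C3_c. auto. }
  assert (Ceg : C3 (fun _ _ c => 1 - exp (-2 * g c))).
  { apply C3_c. intros c Hc. eapply der_cont.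
    apply dminus. apply dconst. apply (is_derive_comp exp (fun c => -2 * g c)). apply is_derive_exp.
    apply (is_derive_scal g). apply Hg; auto. }
  assert (U0 : C3 (fun a b c => u0 a b c)) by exact (CU []).
  assert (U1 : C3 (fun a b c => pd 0 u0 a b c)) by exact (CU [0%nat]).
  assert (U2 : C3 (fun a b c => pd 1 u0 a b c)) by exact (CU [1%nat]).
  assert (U3 : C3 (fun a b c => pd 2 u0 a b c)) by exact (CU [2%nat]).
  assert (U4 : C3 (fun a b c => pd 0 (pd 0 u0) a b c)) by exact (CU [0%nat;0%nat]).
  assert (U5 : C3 (fun a b c => pd 1 (pd 1 u0) a b c)) by exact (CU [1%nat;1%nat]).
  assert (U6 : C3 (fun a b c => pd 2 (pd 2 u0) a b c)) by exact (CU [2%nat;2%nat]).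
  assert (V0 : C3 (fun a b c => v a b c)) by exact (CVX []).
  assert (V1 : C3 (fun a b c => pd 0 v a b c)) by exact (CVX [0%nat]).
  assert (V2 : C3 (fun a b c => pd 1 v a b c)) by exact (CVX [1%nat]).
  assert (V3 : C3 (fun a b c => pd 2 v a b c)) by exact (CVX [2%nat]).
  assert (V4 : C3 (fun a b c => pd 0 (pd 0 v) a b c)) by exact (CVX [0%nat;0%nat]).
  assert (V5 : C3 (fun a b c => pd 1 (pd 1 v) a b c)) by exact (CVX [1%nat;1%nat]).
  assert (V6 : C3 (fun a b c => pd 2 (pd 2 v) a b c)) by exact (CVX [2%nat;2%nat]).
  Ltac c3 := repeat (match goal with H : ?G |- ?G => exact H | _ => first [ apply C3_plus | apply C3_minus | apply C3_mult | apply C3_opp ] end).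
  assert (CHa : C3 (Ha u0 g v)) by (unfold Ha; c3).
  assert (CDHa : C3 (DHa u0 g v)) by (unfold DHa; c3).
  assert (CHb : C3 (Hb u0 g v)) by (unfold Hb; c3).
  assert (CDHb : C3 (DHb u0 g v)) by (unfold DHb; c3).
  assert (CDKc : C3 (DKc u0 g dg v)) by (unfold DKc; c3).
  assert (CQ : C3 (Qp u0 g dg v)) by (unfold Qp, Eu; c3).
  assert (ZV : forall a b c, Zout M d a b c -> v a b c = 0) by (intros; apply Hvz; auto).
  assert (ZV0 := pd_zero 0 v M d Hd ZV). assert (ZV1 := pd_zero 1 v M d Hd ZV). assert (ZV2 := pd_zero 2 v M d Hd ZV).
  destruct (closure_zero v M d Hd (CV []) ZV) as [B0a [B0b B0c]].
  destruct (closure_zero (pd 0 v) M d Hd (CV [0%nat]) ZV0) as [B1a _].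
  destruct (closure_zero (pd 1 v) M d Hd (CV [1%nat]) ZV1) as [_ [B2b _]].
  destruct (closure_zero (pd 2 v) M d Hd (CV [2%nat]) ZV2) as [_ [_ B3c]].
  transitivity (box_int (fun a b c => Qp u0 g dg v a b c + DHa u0 g v a b c + DHb u0 g v a b c + DKc u0 g dg v a b c) M d).
  - apply box_int_ext; auto. intros a b c Hc.
    assert (Hp := Hpde a b c Hc). unfold Laplacian in Hp.
    unfold weak_integrand, Laplacian, Qp, Eu, DHa, DHb, DKc.
    assert (E1 : exp (-2 * (u0 a b c + g c)) = exp (-2 * u0 a b c) * exp (-2 * g c)).
    { rewrite <- exp_plus. f_equal. ring. }
    rewrite E1.
    replace (exp (-2 * u0 a b c) * exp (-2 * g c) * Pabs2 coef N a b * v a b c)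
      with ((exp (-2 * u0 a b c) * Pabs2 coef N a b) * exp (-2 * g c) * v a b c) by ring.
    replace (exp (-2 * u0 a b c) * Pabs2 coef N a b) with
      (-(pd 0 (pd 0 u0) a b c + pd 1 (pd 1 u0) a b c + pd 2 (pd 2 u0) a b c)) by lra.
    ring.
  - rewrite (box_int_plus (fun a b c => Qp u0 g dg v a b c + DHa u0 g v a b c + DHb u0 g v a b c) (DKc u0 g dg v)); [| c3 | c3 | auto].
    rewrite (box_int_plus (fun a b c => Qp u0 g dg v a b c + DHa u0 g v a b c) (DHb u0 g v)); [| c3 | c3 | auto].
    rewrite (box_int_plus (Qp u0 g dg v) (DHa u0 g v)); [| c3 | c3 | auto].
    rewrite (int_da_zero (Ha u0 g v) (DHa u0 g v)); auto.
    rewrite (int_db_zero (Hb u0 g v) (DHb u0 g v)); auto.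
    rewrite (int_dc_zero (Kc u0 g v) (DKc u0 g dg v)); auto.
    ring.
    + intros a b c Hc. apply Kc_der; auto.
    + intros a b Ha' Hb'. unfold Kc. rewrite (proj1 (B0c a b)), (proj2 (B0c a b)), (proj1 (B3c a b)), (proj2 (B3c a b)). split; lra.
    + intros a b c Hc. apply Hb_der; auto.
    + intros a c Hc. unfold Hb. rewrite (proj1 (B0b a c)), (proj2 (B0b a c)), (proj1 (B2b a c)), (proj2 (B2b a c)). split; lra.
    + intros a b c Hc. apply Ha_der; auto.
    + intros b c Hc. unfold Ha. rewrite (proj1 (B0a b c)), (proj2 (B0a b c)), (proj1 (B1a b c)), (proj2 (B1a b c)). split; lra.
Qed.


Lemma loc3_pos a b c : 0 < c -> locally (a, b, c) (fun p : R*R*R => 0 < snd p).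
Proof. intro Hc. exists (mkposreal c Hc). intros [[x y] z] [_ Hz]. simpl in *.
  change (Rabs (z - c) < c) in Hz. apply Rabs_lt_between in Hz. lra. Qed.

Lemma sum_eq f g : smooth_on inX f -> smooth_on inX g ->
  forall l a b c, 0 < c -> iter_pd l (fun a b c => f a b c + g a b c) a b c = iter_pd l f a b c + iter_pd l g a b c.
Proof. intros Hf Hg l. induction l as [|i l IH]; intros a b c Hc; simpl; auto.
  destruct i as [|[|i]]; simpl.
  - rewrite (Derive_ext _ (fun t => iter_pd l f t b c + iter_pd l g t b c)) by (intro t; apply IH; auto).
    apply Derive_plus. apply (proj2 (Hf l a b c Hc) 0%nat). apply (proj2 (Hg l a b c Hc) 0%nat).
  - rewrite (Derive_ext _ (fun t => iter_pd l f a t c + iter_pd l g a t c)) by (intro t; apply IH; auto).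
    apply Derive_plus. apply (proj2 (Hf l a b c Hc) 1%nat). apply (proj2 (Hg l a b c Hc) 1%nat).
  - rewrite (Derive_ext_loc _ (fun t => iter_pd l f a b t + iter_pd l g a b t)).
    apply Derive_plus. apply (proj2 (Hf l a b c Hc) 2%nat). apply (proj2 (Hg l a b c Hc) 2%nat).
    apply loc_delta with c; auto. intros t Ht. apply Rabs_lt_between in Ht. apply IH. lra.
Qed.

Lemma sum_smooth f g : smooth_on inX f -> smooth_on inX g -> smooth_on inX (fun a b c => f a b c + g a b c).
Proof. intros Hf Hg l a b c Hc. split.
  - unfold cont3_at. apply (continuous_ext_loc _ (fun p : R*R*R => iter_pd l f (fst (fst p)) (snd (fst p)) (snd p) + iter_pd l g (fst (fst p)) (snd (fst p)) (snd p))).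
    + generalize (loc3_pos a b c Hc). apply filter_imp. intros p Hp. symmetry. apply sum_eq; auto.
    + apply (continuous_plus (fun p : R*R*R => iter_pd l f _ _ _) (fun p : R*R*R => iter_pd l g _ _ _)).
      apply (Hf l a b c Hc). apply (Hg l a b c Hc).
  - intro i. destruct i as [|[|i]]; simpl.
    + apply (ex_derive_ext (fun t => iter_pd l f t b c + iter_pd l g t b c)).
      intro t; symmetry; apply sum_eq; auto.
      apply (ex_derive_plus (fun t => iter_pd l f t b c) (fun t => iter_pd l g t b c)).
      apply (proj2 (Hf l a b c Hc) 0%nat). apply (proj2 (Hg l a b c Hc) 0%nat).
    + apply (ex_derive_ext (fun t => iter_pd l f a t c + iter_pd l g a t c)).
      intro t; symmetry; apply sum_eq; auto.
      apply (ex_derive_plus (fun t => iter_pd l f a t c) (fun t => iter_pd l g a t c)).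
      apply (proj2 (Hf l a b c Hc) 1%nat). apply (proj2 (Hg l a b c Hc) 1%nat).
    + apply (ex_derive_ext_loc (fun t => iter_pd l f a b t + iter_pd l g a b t)).
      apply loc_delta with c; auto. intros t Ht. apply Rabs_lt_between in Ht. symmetry. apply sum_eq; auto. lra.
      apply (ex_derive_plus (fun t => iter_pd l f a b t) (fun t => iter_pd l g a b t)).
      apply (proj2 (Hf l a b c Hc) 2%nat). apply (proj2 (Hg l a b c Hc) 2%nat).
Qed.

Lemma lin_c : forall l, exists al be, forall a b c, iter_pd l (fun _ _ c => c) a b c = al * c + be.
Proof. induction l as [|i l IH]. exists 1, 0. intros; simpl; ring.
  destruct IH as [al [be H]]. destruct i as [|[|i]]; simpl.
  - exists 0, 0. intros a b c. rewrite (Derive_ext _ (fun _ => al * c + be)) by (intro; apply H). rewrite Derive_const; lra.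
  - exists 0, 0. intros a b c. rewrite (Derive_ext _ (fun _ => al * c + be)) by (intro; apply H). rewrite Derive_const; lra.
  - exists 0, al. intros a b c. rewrite (Derive_ext _ (fun t => al * t + be)) by (intro; apply H).
    apply is_derive_unique. eapply deq. apply dplus. apply (is_derive_scal (fun t => t)). 
    apply (is_derive_id (K:=R_AbsRing)). apply dconst. simpl. change (al * 1 + 0 = 0 * c + al). lra.
Qed.

Lemma c_smooth : smooth_on inX (fun _ _ c => c).
Proof. intros l a b c Hc. destruct (lin_c l) as [al [be H]]. split.
  - unfold cont3_at. apply (continuous_ext_loc _ (fun p : R*R*R => al * snd p + be)).
    apply filter_forall. intro p. symmetry. apply H.
    apply (continuous_plus (fun p : R*R*R => al * snd p) (fun _ => be)).
    apply (continuous_mult (fun _ : R*R*R => al) (fun p : R*R*R => snd p)). apply continuous_const. apply continuous_snd.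
    apply continuous_const.
  - intro i. destruct i as [|[|i]]; simpl.
    + apply (ex_derive_ext (fun _ => al * c + be)). intro; symmetry; apply H. eexists; apply dconst.
    + apply (ex_derive_ext (fun _ => al * c + be)). intro; symmetry; apply H. eexists; apply dconst.
    + apply (ex_derive_ext (fun t => al * t + be)). intro; symmetry; apply H. eexists.
      apply dplus. apply (is_derive_scal (fun t => t)). apply (is_derive_id (K:=R_AbsRing)). apply dconst.
Qed.

Lemma Pabs2_nonneg coef N a b : 0 <= Pabs2 coef N a b.
Proof. unfold Pabs2. apply pow2_ge_0. Qed.

Lemma cfun_2 i a b c : (i = 0 \/ i = 1 \/ i = 2)%nat -> iter_pd [i; i] (fun _ _ c => c) a b c = 0.
Proof. intros [H|[H|H]]; subst i; simpl.
  - rewrite (Derive_ext _ (fun _ => 0)). apply Derive_const. intro t. apply Derive_const.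
  - rewrite (Derive_ext _ (fun _ => 0)). apply Derive_const. intro t. apply Derive_const.
  - rewrite (Derive_ext _ (fun _ => 1)). apply Derive_const. intro t. apply Derive_id.
Qed.

Lemma exp_split x y : exp (-2 * (x + y)) = exp (-2 * x) * exp (-2 * y).
Proof. rewrite <- exp_plus. f_equal. ring. Qed.

Lemma wplus_classical N coef u0 : is_solution coef N u0 ->
  classical_supersolution coef N (fun a b c => u0 a b c + c).
Proof. intros [Hs Hpde]. split.
  - apply (sum_smooth u0 (fun _ _ c => c)); auto. apply c_smooth.
  - intros a b c Hc.
    assert (E : forall l, iter_pd l (fun a b c => u0 a b c + c) a b c = iter_pd l u0 a b c + iter_pd l (fun _ _ c => c) a b c).
    { intro l. apply (sum_eq u0 (fun _ _ c => c)); auto. apply c_smooth. }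
    assert (Hp := Hpde a b c Hc). unfold Laplacian in Hp |- *.
    change (iter_pd [0%nat;0%nat] (fun a b c => u0 a b c + c) a b c + iter_pd [1%nat;1%nat] (fun a b c => u0 a b c + c) a b c
       + iter_pd [2%nat;2%nat] (fun a b c => u0 a b c + c) a b c + exp (-2 * (u0 a b c + c)) * Pabs2 coef N a b <= 0).
    rewrite !E, !cfun_2 by lia.
    change (pd 0 (pd 0 u0) a b c + 0 + (pd 1 (pd 1 u0) a b c + 0) + (pd 2 (pd 2 u0) a b c + 0) +
      exp (-2 * (u0 a b c + c)) * Pabs2 coef N a b <= 0).
    rewrite exp_split.
    assert (H1 : exp (-2 * c) < 1). { rewrite <- exp_0. apply exp_increasing. unfold inX in Hc. lra. }
    assert (H2 := exp_pos (-2 * u0 a b c)). assert (H3 := Pabs2_nonneg coef N a b).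
    assert (H4 := exp_pos (-2 * c)).
    assert (0 <= exp (-2 * u0 a b c) * Pabs2 coef N a b) by (apply Rmult_le_pos; lra).
    nra.
Qed.

Lemma Eu_eq N coef u0 a b c : is_solution coef N u0 -> 0 < c ->
  Eu u0 a b c = exp (-2 * u0 a b c) * Pabs2 coef N a b.
Proof. intros [_ Hpde] Hc. assert (Hp := Hpde a b c Hc). unfold Laplacian in Hp. unfold Eu. lra. Qed.

Lemma Eu_nonneg N coef u0 a b c : is_solution coef N u0 -> 0 < c -> 0 <= Eu u0 a b c.
Proof. intros Hs Hc. rewrite (Eu_eq N coef u0 a b c Hs Hc).
  apply Rmult_le_pos. apply Rlt_le, exp_pos. apply Pabs2_nonneg. Qed.

Lemma C3_Eu N coef u0 : is_solution coef N u0 -> C3 (Eu u0).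
Proof. intros [Hs _]. unfold Eu. apply C3_opp. apply C3_plus. apply C3_plus.
  all: intros a b c Hc; apply (sm_cont inX _ [_;_]); auto. Qed.

Lemma C3_v v l : smooth_on (fun _ _ _ => True) v -> C3 (iter_pd l v).
Proof. intros Hv a b c _. apply (sm_cont (fun _ _ _ => True)); auto. Qed.

Lemma int_vc v a b lo hi : smooth_on (fun _ _ _ => True) v -> lo <= hi ->
  RInt (fun c => pd 2 v a b c) lo hi = v a b hi - v a b lo.
Proof. intros Hv Hl. apply is_RInt_unique.
  apply (is_RInt_derive (V:=R_CompleteNormedModule) (fun c => v a b c)).
  - intros x _. apply (sm_d2 _ v [] a b x Hv I).
  - intros x _. apply cont3_c. apply (sm_cont _ v [2%nat] a b x Hv I).
Qed.

Lemma wplus_weak N coef u0 : is_solution coef N u0 ->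
  weak_supersolution coef N (fun a b c => u0 a b c + c).
Proof. intros Hsol. assert (Hsm : smooth_on inX (fun a b c => u0 a b c + c)).
  { apply (sum_smooth u0 (fun _ _ c => c)). apply Hsol. apply c_smooth. }
  split.
  - intros a b c Hc. apply (Hsm [] a b c Hc).
  - intros v M d Htf.
    assert (HK := key N coef u0 (fun c => c) (fun _ => 1) v M d Hsol).
    assert (Hg : forall c, 0 < c -> is_derive (fun c => c) c 1). { intros. apply (is_derive_id (K:=R_AbsRing)). }
    assert (Hdg : forall c : R, 0 < c -> continuous (fun _ : R => 1) c). { intros; apply continuous_const. }
    specialize (HK Hg Hdg Htf). cbv beta in HK. rewrite HK.
    destruct Htf as [Hv [Hv0 [Hd Hvz]]].
    assert (CE := C3_Eu N coef u0 Hsol).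
    assert (C1 : C3 (fun a b c => Eu u0 a b c * v a b c * (1 - exp (-2 * c)))).
    { apply C3_mult. apply C3_mult. exact CE. exact (C3_v v [] Hv).
      apply C3_c. intros c _. eapply der_cont.
      apply dminus. apply dconst. apply (is_derive_comp exp (fun c => -2 * c)). apply is_derive_exp.
      apply (is_derive_scal (fun c => c)). apply (is_derive_id (K:=R_AbsRing)). }
    assert (C2 : C3 (fun a b c => 1 * pd 2 v a b c)).
    { apply C3_mult. apply C3_const. exact (C3_v v [2%nat] Hv). }
    apply box_int_ge0. unfold Qp. apply (C3_plus _ _ C1 C2). exact Hd.
    intros a b Ha Hb. unfold Qp.
    rewrite (RInt_plusR (fun c => Eu u0 a b c * v a b c * (1 - exp (-2 * c))) (fun c => 1 * pd 2 v a b c)).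
    2: apply (exc _ a b d M C1); lra. 2: apply (exc _ a b d M C2); lra.
    rewrite (RInt_ext (fun c => 1 * pd 2 v a b c) (fun c => pd 2 v a b c)) by (intros; lra).
    rewrite int_vc by (auto; lra).
    destruct (closure_zero v M d Hd (fun a b c => sm_cont _ v [] a b c Hv I) (fun a b c H => Hvz a b c H)) as [_ [_ Bc]].
    rewrite (proj1 (Bc a b)), (proj2 (Bc a b)).
    apply Rle_trans with (RInt (fun _ => 0) d M). right; symmetry; apply RInt0.
    replace (RInt (fun c => Eu u0 a b c * v a b c * (1 - exp (-2 * c))) d M + (0 - 0))
      with (RInt (fun c => Eu u0 a b c * v a b c * (1 - exp (-2 * c))) d M) by lra.
    apply RInt_le. lra. apply ex_RInt_const. apply (exc _ a b d M C1); lra.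
    intros c Hc. apply Rmult_le_pos. apply Rmult_le_pos. apply (Eu_nonneg N coef); [exact Hsol | lra]. apply Hv0.
    assert (exp (-2 * c) < 1). { rewrite <- exp_0. apply exp_increasing. lra. } lra.
Qed.


Lemma ln_le_m1 y : 0 < y -> ln y <= y - 1.
Proof. intro Hy. rewrite <- (ln_exp (y - 1)). apply ln_le; auto.
  destruct (Req_dec y 1) as [E|E]. subst. replace (1 - 1) with 0 by ring. rewrite exp_0. lra.
  assert (H := exp_ineq1 (y - 1)). assert (y - 1 <> 0) by lra. specialize (H H0). lra. Qed.

Lemma ln_ge y : 0 < y -> 1 - / y <= ln y.
Proof. intro Hy. assert (H := ln_le_m1 (/ y) (Rinv_0_lt_compat _ Hy)). rewrite ln_Rinv in H; auto. lra. Qed.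

Lemma fC_zero C0 y : y <= C0 -> fC C0 y = 0.
Proof. intro H. unfold fC. destruct (Rle_dec y C0); auto; lra. Qed.

Lemma fC_gt C0 y : C0 < y -> fC C0 y = y - C0 * ln (y / C0) - C0.
Proof. intro H. unfold fC. destruct (Rle_dec y C0); auto; lra. Qed.

Lemma fC_nonneg C0 y : 1 <= C0 -> 0 <= fC C0 y.
Proof. intro H1. destruct (Rle_dec y C0) as [H|H]. rewrite fC_zero; lra.
  rewrite fC_gt by lra. assert (Hy : 0 < y / C0) by (apply Rdiv_lt_0_compat; lra).
  assert (L := ln_le_m1 _ Hy). 
  assert (C0 * ln (y / C0) <= C0 * (y / C0 - 1)) by (apply Rmult_le_compat_l; lra).
  replace (C0 * (y / C0 - 1)) with (y - C0) in H0 by (field; lra). lra. Qed.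

Lemma fC_le C0 y : 1 <= C0 -> 0 < y -> fC C0 y <= y.
Proof. intros H1 Hy. destruct (Rle_dec y C0) as [H|H]. rewrite fC_zero; lra.
  rewrite fC_gt by lra. assert (ln (y / C0) > 0).
  { rewrite <- ln_1. apply ln_increasing. lra. apply Rmult_lt_reg_r with C0. lra.
    unfold Rdiv. rewrite Rmult_assoc, Rinv_l by lra. lra. }
  assert (C0 * ln (y / C0) > 0) by (apply Rmult_lt_0_compat; lra). lra. Qed.

Definition dgC (C0 c : R) : R := Rmax 0 (1 - C0 / c).

Lemma fC_deriv C0 c : 1 <= C0 -> 0 < c -> is_derive (fC C0) c (dgC C0 c).
Proof. intros H1 Hc. unfold dgC. destruct (Rtotal_order c C0) as [Hlt|[Heq|Hgt]].
  - rewrite Rmax_left.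
    2: { assert (C0 / c > 1). { apply Rmult_lt_reg_r with c. lra. unfold Rdiv. rewrite Rmult_assoc, Rinv_l by lra. lra. } lra. }
    apply (is_derive_ext_loc (fun _ => 0)). apply loc_delta with (C0 - c). lra.
    intros t Ht. apply Rabs_lt_between in Ht. symmetry. apply fC_zero. lra.
    apply dconst.
  - subst c. replace (1 - C0 / C0) with 0 by (field; lra). rewrite Rmax_left by lra.
    apply is_derive_Reals. intros eps Heps. exists (mkposreal eps Heps). intros h Hh Hhe. simpl in Hhe.
    rewrite (fC_zero C0 C0) by lra.
    destruct (Rle_dec h 0) as [Hn|Hp].
    + rewrite fC_zero by lra. replace ((0 - 0) / h - 0) with 0 by (field; lra). rewrite Rabs_R0. lra.
    + rewrite fC_gt by lra.
      assert (Hy : 0 < (C0 + h) / C0) by (apply Rdiv_lt_0_compat; lra).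
      assert (L1 := ln_le_m1 _ Hy). assert (L2 := ln_ge _ Hy).
      assert (E1 : / ((C0 + h) / C0) = C0 / (C0 + h)) by (field; lra).
      rewrite E1 in L2.
      set (F := C0 + h - C0 * ln ((C0 + h) / C0) - C0).
      assert (F0 : 0 <= F).
      { unfold F. assert (C0 * ln ((C0 + h) / C0) <= C0 * ((C0 + h) / C0 - 1)) by (apply Rmult_le_compat_l; lra).
        replace (C0 * ((C0 + h) / C0 - 1)) with h in H by (field; lra). lra. }
      assert (F1 : F <= h * h).
      { unfold F. assert (C0 * (1 - C0 / (C0 + h)) <= C0 * ln ((C0 + h) / C0)) by (apply Rmult_le_compat_l; lra).
        replace (C0 * (1 - C0 / (C0 + h))) with (h - h * h / (C0 + h)) in H by (field; lra).
        assert (h * h / (C0 + h) <= h * h).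
        { unfold Rdiv. rewrite <- (Rmult_1_r (h * h)) at 2. apply Rmult_le_compat_l. nra.
          rewrite <- Rinv_1. apply Rinv_le_contravar; lra. }
        lra. }
      replace ((F - 0) / h - 0) with (F / h) by (field; lra).
      rewrite Rabs_pos_eq by (apply Rdiv_le_0_compat; lra).
      apply Rle_lt_trans with h. apply Rmult_le_reg_r with h. lra. unfold Rdiv. rewrite Rmult_assoc, Rinv_l by lra. lra.
      rewrite Rabs_pos_eq in Hhe by lra. lra.
  - rewrite Rmax_right.
    2: { assert (C0 / c < 1). { apply Rmult_lt_reg_r with c. lra. unfold Rdiv. rewrite Rmult_assoc, Rinv_l by lra. lra. } lra. }
    apply (is_derive_ext_loc (fun t => t - C0 * ln (t / C0) - C0)).
    apply loc_delta with (c - C0). lra.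
    intros t Ht. apply Rabs_lt_between in Ht. symmetry. apply fC_gt. lra.
    auto_derive. apply Rdiv_lt_0_compat; lra. field. lra.
Qed.

Lemma dgC_eq C0 t : dgC C0 t = / 2 * ((1 - C0 / t) + Rabs (1 - C0 / t)).
Proof. unfold dgC, Rmax. destruct (Rle_dec 0 (1 - C0 / t)).
    - rewrite (Rabs_pos_eq (1 - C0 / t) r). lra.
    - assert (Hn : 1 - C0 / t < 0) by lra. rewrite (Rabs_left _ Hn). lra. Qed.

Lemma dgC_cont C0 c : 1 <= C0 -> 0 < c -> continuous (dgC C0) c.
Proof. intros H1 Hc.
  apply (continuous_ext (fun t => / 2 * ((1 - C0 / t) + Rabs (1 - C0 / t)))).
  - intro t. symmetry. apply dgC_eq.
  - assert (Hh : continuous (fun t => 1 - C0 / t) c).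
    { eapply der_cont. auto_derive. lra. reflexivity. }
    apply (continuous_mult (fun _ => /2) (fun t => (1 - C0 / t) + Rabs (1 - C0 / t))). apply continuous_const.
    apply (continuous_plus (fun t => 1 - C0 / t) (fun t => Rabs (1 - C0 / t))). exact Hh.
    apply continuous_Rabs_comp. exact Hh.
Qed.

Lemma RInt_ex_cont (f : R -> R) lo hi : 0 < lo -> lo <= hi -> (forall c, 0 < c -> continuous f c) -> ex_RInt f lo hi.
Proof. intros H0 Hl Hc. apply (ex_RInt_continuous (V:=R_CompleteNormedModule)).
  intros z Hz. rewrite Rmin_left, Rmax_right in Hz by lra. apply Hc. lra. Qed.

Lemma onedim (E V Vc : R -> R) d M C0 : 0 < d < M -> 1 <= C0 ->
  (forall c, 0 < c -> continuous E c) -> (forall c, 0 < c -> continuous V c) ->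
  (forall c, 0 < c -> continuous Vc c) -> (forall c, 0 < c -> is_derive V c (Vc c)) ->
  (forall c, 0 <= V c) -> V M = 0 ->
  (forall c, 0 < c -> 0 <= E c <= C0 / (c * c)) ->
  RInt (fun c => E c * V c * (1 - exp (-2 * fC C0 c)) + dgC C0 c * Vc c) d M <= 0.
Proof. intros Hd H1 CE CV CVc DV V0 VM HE.
  assert (CfC : forall c, 0 < c -> continuous (fC C0) c). { intros c Hc. eapply der_cont. apply fC_deriv; auto. }
  assert (Ce : forall c, 0 < c -> continuous (fun c => 1 - exp (-2 * fC C0 c)) c).
  { intros c Hc. eapply der_cont. apply dminus. apply dconst. apply (is_derive_comp exp (fun c => -2 * fC C0 c)). apply is_derive_exp.
    apply (is_derive_scal (fC C0)). apply fC_deriv; auto. }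
  set (f1 := fun c => E c * V c * (1 - exp (-2 * fC C0 c))).
  assert (Cf1 : forall c, 0 < c -> continuous f1 c).
  { intros c Hc. unfold f1. apply (continuous_mult (fun c => E c * V c) (fun c => 1 - exp (-2 * fC C0 c))).
    apply (continuous_mult E V); auto. auto. }
  assert (CF : forall c, 0 < c -> continuous (fun c => f1 c + dgC C0 c * Vc c) c).
  { intros c Hc. apply (continuous_plus f1 (fun c => dgC C0 c * Vc c)). auto.
    apply (continuous_mult (dgC C0) Vc). apply dgC_cont; auto. auto. }
  assert (Cg2 : forall c, 0 < c -> continuous (fun c => dgC C0 c * Vc c) c).
  { intros c Hc. apply (continuous_mult (dgC C0) Vc). apply dgC_cont; auto. auto. }
  change (RInt (fun c => f1 c + dgC C0 c * Vc c) d M <= 0).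
  assert (Zlow : forall c, 0 < c < C0 -> f1 c + dgC C0 c * Vc c = 0).
  { intros c Hc. unfold f1. rewrite fC_zero by lra. unfold dgC. rewrite Rmax_left.
    replace (-2 * 0) with 0 by ring. rewrite exp_0. ring.
    assert (C0 / c > 1). { apply Rmult_lt_reg_r with c. lra. unfold Rdiv. rewrite Rmult_assoc, Rinv_l by lra. lra. } lra. }
  destruct (Rle_dec M C0) as [HM|HM].
  - right. rewrite <- (RInt0 d M). apply RInt_ext. intros x Hx. rewrite Rmin_left, Rmax_right in Hx by lra.
    apply Zlow. lra.
  - set (Cp := Rmax C0 d).
    assert (HCp : d <= Cp < M /\ C0 <= Cp). { unfold Cp, Rmax. destruct Rle_dec; lra. }
    assert (Hlow : forall x, d < x < Cp -> x < C0). { intros x Hx. unfold Cp, Rmax in Hx. destruct Rle_dec; lra. }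
    rewrite <- (RInt_Chasles (V:=R_CompleteNormedModule) _ d Cp M).
    2: apply RInt_ex_cont; auto; lra. 2: apply RInt_ex_cont; auto; lra.
    assert (E1 : RInt (fun c => f1 c + dgC C0 c * Vc c) d Cp = 0).
    { rewrite <- (RInt0 d Cp). apply RInt_ext. intros x Hx. rewrite Rmin_left, Rmax_right in Hx by lra.
      apply Zlow. split. lra. apply Hlow. lra. }
    rewrite E1.
    assert (Cq1 : forall c, 0 < c -> continuous (fun c => 1 - C0 / c) c).
    { intros c Hc. eapply der_cont. auto_derive. lra. reflexivity. }
    assert (Cq2 : forall c, 0 < c -> continuous (fun c => C0 / (c * c) * V c) c).
    { intros c Hc. apply (continuous_mult (fun c => C0 / (c * c)) V); auto. eapply der_cont. auto_derive. nra. reflexivity. }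
    assert (Cq3 : forall c, 0 < c -> continuous (fun c => (1 - C0 / c) * Vc c) c).
    { intros c Hc. apply (continuous_mult (fun c => 1 - C0 / c) Vc); auto. }
    assert (IBP : RInt (fun c => C0 / (c * c) * V c + (1 - C0 / c) * Vc c) Cp M
                  = (1 - C0 / M) * V M - (1 - C0 / Cp) * V Cp).
    { apply is_RInt_unique.
      apply (is_RInt_derive (V:=R_CompleteNormedModule) (fun c => (1 - C0 / c) * V c)).
      - intros x Hx. rewrite Rmin_left, Rmax_right in Hx by lra.
        eapply deq. apply dmult. apply dminus. apply dconst.
        apply (is_derive_scal (fun c => / c)). apply (is_derive_inv (fun c => c) x 1). apply (is_derive_id (K:=R_AbsRing)). lra.
        apply DV; lra. simpl. field. lra.
      - intros x Hx. rewrite Rmin_left, Rmax_right in Hx by lra.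
        apply (continuous_plus (fun c => C0 / (c * c) * V c) (fun c => (1 - C0 / c) * Vc c)).
        apply Cq2; lra. apply Cq3; lra. }
    rewrite RInt_plusR in IBP by (apply RInt_ex_cont; auto; lra).
    rewrite (RInt_plusR f1 (fun c => dgC C0 c * Vc c)) by (apply RInt_ex_cont; auto; lra).
    rewrite (RInt_ext (fun c => dgC C0 c * Vc c) (fun c => (1 - C0 / c) * Vc c)).
    2: { intros x Hx. rewrite Rmin_left, Rmax_right in Hx by lra. unfold dgC. rewrite Rmax_right. reflexivity.
         assert (C0 / x <= 1). { apply Rmult_le_reg_r with x. lra. unfold Rdiv. rewrite Rmult_assoc, Rinv_l by lra. lra. } lra. }
    assert (Hle : RInt f1 Cp M <= RInt (fun c => C0 / (c * c) * V c) Cp M).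
    { apply RInt_le. lra. apply RInt_ex_cont; auto; lra. apply RInt_ex_cont; auto; lra.
      intros x Hx. unfold f1. destruct (HE x) as [He1 He2]. lra.
      assert (0 <= fC C0 x) by (apply fC_nonneg; auto).
      assert (exp (-2 * fC C0 x) <= 1). { rewrite <- exp_0. destruct (Req_dec (fC C0 x) 0) as [Z|Z].
        rewrite Z. replace (-2*0) with 0 by ring. lra. left. apply exp_increasing. lra. }
      assert (0 < exp (-2 * fC C0 x)) by apply exp_pos.
      assert (0 <= V x) by apply V0.
      assert (E x * V x * (1 - exp (-2 * fC C0 x)) <= E x * V x).
      { rewrite <- (Rmult_1_r (E x * V x)) at 2. apply Rmult_le_compat_l. apply Rmult_le_pos; lra. lra. }
      assert (E x * V x <= C0 / (x * x) * V x) by (apply Rmult_le_compat_r; lra).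
      lra. }
    assert (HCp0 : 0 <= (1 - C0 / Cp) * V Cp).
    { apply Rmult_le_pos; auto. assert (C0 / Cp <= 1). { apply Rmult_le_reg_r with Cp. lra. unfold Rdiv. rewrite Rmult_assoc, Rinv_l by lra. lra. } lra. }
    rewrite VM in IBP. 
    assert (X : 0 + (RInt f1 Cp M + RInt (fun c => (1 - C0 / c) * Vc c) Cp M) <= 0) by lra.
    exact X.
Qed.


Lemma wminus_sub N coef u0 K0 C0 : is_solution coef N u0 ->
  (forall a b c, 0 < c -> c ^ 2 * exp (-2 * u0 a b c) * Pabs2 coef N a b <= K0) ->
  1 <= C0 -> K0 <= C0 ->
  weak_subsolution coef N (fun a b c => u0 a b c + fC C0 c).
Proof. intros Hsol HK0 H1 H2.
  assert (CU0 : C3 (fun a b c => u0 a b c)). { intros a b c Hc. apply (sm_cont inX u0 []); auto. apply Hsol. }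
  assert (CfC : C3 (fun _ _ c => fC C0 c)). { apply C3_c. intros c Hc. eapply der_cont. apply fC_deriv; auto. }
  split.
  - intros a b c Hc. apply (C3_plus _ _ CU0 CfC). exact Hc.
  - intros v M d Htf.
    assert (HK := key N coef u0 (fC C0) (dgC C0) v M d Hsol).
    assert (Hg : forall c, 0 < c -> is_derive (fC C0) c (dgC C0 c)). { intros; apply fC_deriv; auto. }
    assert (Hdg : forall c : R, 0 < c -> continuous (dgC C0) c). { intros; apply dgC_cont; auto. }
    specialize (HK Hg Hdg Htf). rewrite HK.
    destruct Htf as [Hv [Hv0 [Hd Hvz]]].
    assert (CE := C3_Eu N coef u0 Hsol).
    assert (Ceg : C3 (fun _ _ c => 1 - exp (-2 * fC C0 c))).
    { apply C3_c. intros c Hc. eapply der_cont. apply dminus. apply dconst. apply (is_derive_comp exp (fun c => -2 * fC C0 c)). apply is_derive_exp.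
      apply (is_derive_scal (fC C0)). apply fC_deriv; auto. }
    apply box_int_le0; auto.
    + unfold Qp. apply C3_plus. apply C3_mult. apply C3_mult. exact CE. exact (C3_v v [] Hv). exact Ceg.
      apply C3_mult. apply C3_c. exact Hdg. exact (C3_v v [2%nat] Hv).
    + intros a b Ha Hb. unfold Qp.
      destruct (closure_zero v M d Hd (fun a b c => sm_cont _ v [] a b c Hv I) (fun a b c H => Hvz a b c H)) as [_ [_ Bc]].
      apply (onedim (Eu u0 a b) (v a b) (pd 2 v a b) d M C0); auto.
      * intros c Hc. apply (cont3_c (Eu u0)). apply CE; auto.
      * intros c Hc. apply (cont3_c v). apply (sm_cont _ v [] a b c Hv I).
      * intros c Hc. apply (cont3_c (pd 2 v)). apply (sm_cont _ v [2%nat] a b c Hv I).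
      * intros c Hc. apply (sm_d2 _ v [] a b c Hv I).
      * apply Bc.
      * intros c Hc. rewrite (Eu_eq N coef u0 a b c Hsol Hc).
        assert (Hb1 := HK0 a b c Hc).
        assert (Hpos : 0 <= exp (-2 * u0 a b c) * Pabs2 coef N a b).
        { apply Rmult_le_pos. apply Rlt_le, exp_pos. apply Pabs2_nonneg. }
        split; auto.
        apply Rmult_le_reg_r with (c * c). nra.
        replace (C0 / (c * c) * (c * c)) with C0 by (field; nra).
        replace (c ^ 2 * exp (-2 * u0 a b c) * Pabs2 coef N a b) with (exp (-2 * u0 a b c) * Pabs2 coef N a b * (c * c)) in Hb1 by ring.
        lra.
Qed.

Theorem mainTheorem1
  (N : nat) (coef : nat -> C) (hlead : coef N <> RtoC 0)
  (u0 : R -> R -> R -> R)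
  (hsol : is_solution coef N u0)
  (hbd : exists B, forall a b c, inX a b c ->
           c * exp (- u0 a b c) * Cmod (Peval coef N (a, b)) <= B)
  (hasym : exists R0 K, 0 < R0 /\ 0 < K /\
           forall a b c, inX a b c -> R0 <= Rnorm3 a b c ->
             Rabs (u0 a b c - INR N * ln (Rnorm3 a b c) - ln c) <= K)
  (K0 : R)
  (hK0 : is_lub (fun r => exists a b c, inX a b c /\
                   r = c ^ 2 * exp (-2 * u0 a b c) * Pabs2 coef N a b) K0) :
  let wplus := fun a b c => u0 a b c + c in
  (classical_supersolution coef N wplus /\ weak_supersolution coef N wplus) /\
  (forall C0 : R, 1 <= C0 -> K0 <= C0 ->
     let wminus := fun a b c => u0 a b c + fC C0 c in
     weak_subsolution coef N wminus /\
     (forall a b c, inX a b c ->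
        u0 a b c <= wminus a b c /\ wminus a b c <= wplus a b c)).
Proof.
  intro wplus. split.
  - split. apply wplus_classical; auto. apply wplus_weak; auto.
  - intros C0 H1 H2 wminus. split.
    + apply (wminus_sub N coef u0 K0 C0); auto.
      intros a b c Hc. destruct hK0 as [Hub _]. apply Hub. exists a, b, c. split; auto.
    + intros a b c Hc. unfold wminus, wplus. unfold inX in Hc.
      assert (A1 := fC_nonneg C0 c H1). assert (A2 := fC_le C0 c H1 Hc). lra.
Qed.
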